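(* Let $V$ be a finite set, $\mu_1,\mu_2$ probability measures on $V$ and $\rho$ a coupling between them. Then $\rho$ is economic if and only if the flow $\sum_{x,y\in V,\,x\neq y}\rho(x,y)Q_{(x,y)}$ on the complete digraph on $V$ (edges all pairs $(x,y)$ with $x\ne y$) is acyclic.
   Context: A coupling is a probability measure $\rho$ on $V\times V$ with marginals $\mu_1,\mu_2$. A path from $x$ to $y$ is any sequence $(x_0,\dots,x_n)$ of elements of $V$ with $x_0=x$, $x_n=y$, $x_i\neq x_{i+1}$ (no constraint other than the endpoints). For such $\gamma$, $Q_\gamma(u,v)=1$ if $(u,v)=(x_i,x_{i+1})$ for some $i$ and $0$ otherwise; $Q_{(x,y)}$ is this for the one-edge path. A flow is a nonnegative function $Q$ on ordered pairs of distinct elements; $E(Q)=\{(u,v):Q(u,v)>0\}$; $Q$ is acyclic if $(V,E(Q))$ has no directed cycle. The coupling $\rho$ is economic if for each pair $x\neq y$ there exist finitely many paths $\gamma^i_{(x,y)}$ from $x$ to $y$ and weights $\rho^i(x,y)\ge0$ with $\sum_i\rho^i(x,y)=\rho(x,y)$ such that the flow $\sum_{x\neq y}\sum_i\rho^i(x,y)Q_{\gamma^i_{(x,y)}}$ is acyclic. *)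

(* Defs.v *)
From mathcomp Require Import all_boot all_order all_algebra.
Set Implicit Arguments. Unset Strict Implicit. Unset Printing Implicit Defensive.
Import Order.TTheory GRing.Theory Num.Theory.
Local Open Scope ring_scope.

Section Defs.
Variables (R : realFieldType) (V : finType).

Definition prob_measure (mu : V -> R) : Prop :=
  (forall v, 0 <= mu v) /\ \sum_(v : V) mu v = 1.

Definition coupling (mu1 mu2 : V -> R) (rho : V -> V -> R) : Prop :=
  (forall x y, 0 <= rho x y) /\
  (forall x, \sum_(y : V) rho x y = mu1 x) /\
  (forall y, \sum_(x : V) rho x y = mu2 y).

(* A path (x_0,...,x_n) from x to y is represented by x_0 = x and the
   sequence s = [:: x_1; ...; x_n]; it must satisfy x_i <> x_{i+1} and
   x_n = y. *)
Definition is_path (x y : V) (s : seq V) : bool :=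
  path (fun a b => a != b) x s && (last x s == y).

Definition Qpath (x : V) (s : seq V) (u v : V) : R :=
  if (u, v) \in zip (x :: s) s then 1 else 0.

Definition Qedge (x y : V) (u v : V) : R := Qpath x [:: y] u v.

Definition flow_edge (Q : V -> V -> R) (u v : V) : bool := (u != v) && (0 < Q u v).

Definition acyclic (Q : V -> V -> R) : Prop :=
  ~ exists (x : V) (s : seq V),
      [/\ s != [::], path (flow_edge Q) x s & last x s = x].

Definition economic (rho : V -> V -> R) : Prop :=
  exists D : V -> V -> seq (seq V * R),
    (forall x y, x != y ->
       (forall p, p \in D x y -> is_path x y p.1 /\ 0 <= p.2) /\
       \sum_(p <- D x y) p.2 = rho x y) /\
    acyclic (fun u v =>
      \sum_(x : V) \sum_(y : V | x != y) \sum_(p <- D x y) p.2 * Qpath x p.1 u v).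

End Defs.

(* Main.v *)
Require Import Defs.
From mathcomp Require Import all_boot all_order all_algebra.
Import Order.TTheory GRing.Theory Num.Theory.
Local Open Scope ring_scope.

Section Aux.
Variables (R : realFieldType) (V : finType).

Lemma acyclic_ext (Q Q' : V -> V -> R) :
  (forall u v, Q u v = Q' u v) -> acyclic Q -> acyclic Q'.
Proof.
move=> E A [x [s [H1 H2 H3]]]; apply: A; exists x, s; split => //.
by rewrite (@eq_path _ _ (flow_edge Q')) // => a b; rewrite /flow_edge E.
Qed.

Lemma Qedge_eq (x y u v : V) : @Qedge R V x y u v = if (x == u) && (y == v) then 1 else 0.
Proof.
rewrite /Qedge /Qpath /= mem_seq1 xpair_eqE.
by rewrite [u == x]eq_sym [v == y]eq_sym.
Qed.

Lemma direct_flow (rho : V -> V -> R) (u v : V) : u != v ->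
  \sum_(x : V) \sum_(y : V | x != y) rho x y * @Qedge R V x y u v = rho u v.
Proof.
move=> uv; rewrite (bigD1 u) //= [X in _ + X]big1 ?addr0; last first.
  move=> x xu; apply: big1 => y _; rewrite Qedge_eq.
  by rewrite (negbTE xu) mulr0.
rewrite (bigD1 v) //= [X in _ + X]big1 ?addr0; first by rewrite Qedge_eq !eqxx mulr1.
by move=> y /andP [_ yv]; rewrite Qedge_eq eqxx (negbTE yv) mulr0.
Qed.

Lemma path_of_zip (Q : V -> V -> R) (x : V) (s : seq V) :
  path (fun a b => a != b) x s ->
  (forall a b, (a, b) \in zip (x :: s) s -> 0 < Q a b) ->
  path (flow_edge Q) x s.
Proof.
elim: s x => [//|y s IH] x /= /andP [xy ps] H.
rewrite /flow_edge xy H ?mem_head //=; apply: IH => // a b ab.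
by apply: H; rewrite in_cons ab orbT.
Qed.

End Aux.

Theorem lemma3p1 (R : realFieldType) (V : finType) (mu1 mu2 : V -> R)
  (rho : V -> V -> R) :
  prob_measure mu1 -> prob_measure mu2 -> coupling mu1 mu2 rho ->
  (economic rho <->
   acyclic (fun u v => \sum_(x : V) \sum_(y : V | x != y) rho x y * @Qedge R V x y u v)).
Proof.
move=> _ _ [rho0 _]; split; last first.
  move=> A; exists (fun x y => [:: ([:: y], rho x y)]); split.
    move=> x y xy; split; last by rewrite big_seq1.
    move=> p; rewrite mem_seq1 => /eqP -> /=; split => //.
    by rewrite /is_path /= xy eqxx.
  apply: acyclic_ext A => u v; apply: eq_bigr => x _; apply: eq_bigr => y _.
  by rewrite big_seq1.
move=> [D [HD A]] [x0 [s [sn ps ls]]]; apply: A.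
pose Qe := (fun u v : V =>
      \sum_(x : V) \sum_(y : V | x != y) \sum_(p <- D x y) p.2 * @Qpath R V x p.1 u v).
have term_ge0 : forall x y a b, x != y ->
    0 <= \sum_(p <- D x y) p.2 * @Qpath R V x p.1 a b.
  move=> x y a b xy; rewrite big_seq; apply: sumr_ge0 => p pD.
  apply: mulr_ge0; first by case: ((HD x y xy).1 p pD).
  by rewrite /Qpath; case: ifP.
have low : forall x y p a b, x != y -> p \in D x y ->
    (a, b) \in zip (x :: p.1) p.1 -> p.2 <= Qe a b.
  move=> x y p a b xy pD ab; rewrite /Qe (bigD1 x) //= (bigD1 y) //=.
  rewrite (big_rem p) //= {1}/Qpath ab mulr1 -!addrA lerDl.
  apply: addr_ge0; first by rewrite big_seq; apply: sumr_ge0 => q /mem_rem qD;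
    apply: mulr_ge0; [case: ((HD x y xy).1 q qD) | rewrite /Qpath; case: ifP].
  apply: addr_ge0; first by apply: sumr_ge0 => z /andP [xz _];
    exact: term_ge0.
  by apply: sumr_ge0 => z _; apply: sumr_ge0 => w wz; exact: term_ge0.
have step : forall u v, flow_edge
    (fun u v => \sum_(x : V) \sum_(y : V | x != y) rho x y * @Qedge R V x y u v) u v ->
    exists t, [/\ t != [::], path (flow_edge Qe) u t & last u t = v].
  move=> u v /andP [uv]; rewrite direct_flow // => rpos.
  have [/hasP [p pD pp]|hn] := boolP (has (fun p : seq V * R => 0 < p.2) (D u v)); last first.
    exfalso; move: rpos; rewrite -(HD u v uv).2 big_seq big1 ?ltxx // => p pD.
    have [_ p0] := (HD u v uv).1 p pD.
    apply/eqP; rewrite eq_le p0 andbT leNgt; apply/negP => H.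
    by move/hasPn: hn => /(_ p pD); rewrite H.
  have [/andP [pth lst] _] := (HD u v uv).1 p pD.
  exists p.1; split.
  - by case: (p.1) lst => //= /eqP E; move: uv; rewrite E eqxx.
  - apply: path_of_zip => // a b ab; exact: lt_le_trans pp (low _ _ _ _ _ uv pD ab).
  - exact/eqP.
have walk : forall x s, path (flow_edge
    (fun u v => \sum_(x : V) \sum_(y : V | x != y) rho x y * @Qedge R V x y u v)) x s ->
    exists t, [/\ path (flow_edge Qe) x t, last x t = last x s & (s != [::] -> t != [::])].
  move=> x s'; elim: s' x => [|y s' IH] x /=; first by move=> _; exists [::].
  move=> /andP [e p']; have [t1 [t1n pt1 lt1]] := step _ _ e.
  have [t2 [pt2 lt2 _]] := IH _ p'.
  exists (t1 ++ t2); split.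
  - by rewrite cat_path pt1 lt1 pt2.
  - by rewrite last_cat lt1 lt2.
  - by move=> _; case: (t1) t1n.
have [t [pt lt tn]] := walk _ _ ps.
by exists x0, t; split => //; [exact: tn | rewrite lt ls].
Qed.
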